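(* Let $n\ge 1$, let $\Gamma\in G_n$, and let $M_\Gamma\in M_{n+1,n}(\mathbb{N})$ be its multiplicity matrix. If $\mathrm{rank}(M_\Gamma)=n$, then $\Gamma$ has a minimal reduction, i.e. there is a subgraph $\gamma$ of $\Gamma$, obtained from $\Gamma$ by deleting edges only, such that $\gamma\in G_n$ and $\gamma$ has exactly $n+1$ edges.
   Context: For $n\ge 1$, $G_n$ denotes the set of finite (multi)graphs with $2n+1$ vertices, $n$ of them in ''level 1'' and $n+1$ in ''level 2'', such that (I) every edge joins a level-1 vertex to a level-2 vertex (no edges within a level; multiple edges allowed), and (II) every vertex is incident to at least one edge. Ordering the level-1 vertices $1,\dots,n$ and level-2 vertices $1,\dots,n+1$, the multiplicity matrix $M_\Gamma$ has $(i,j)$ entry equal to the number of edges joining level-2 vertex $i$ and level-1 vertex $j$. Rank is over $\mathbb{Q}$ (equivalently $\mathbb{C}$). *)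

(* Defs.v *)
From mathcomp Require Import all_boot all_order all_algebra.
Set Implicit Arguments. Unset Strict Implicit. Unset Printing Implicit Defensive.
Import GRing.Theory Num.Theory.

(* A graph Gamma in G_n is represented by its multiplicity matrix
   M : 'M[nat]_(n.+1, n): M i j = number of edges between level-2 vertex i
   and level-1 vertex j.  Condition (I) is built into this representation
   (edges only between levels); condition (II) says every row and every
   column of M has a nonzero entry. *)
Definition in_G (n : nat) (M : 'M[nat]_(n.+1, n)) : Prop :=
  (forall i : 'I_n.+1, exists j : 'I_n, 0 < M i j)%N /\
  (forall j : 'I_n, exists i : 'I_n.+1, 0 < M i j)%N.

Definition edge_subgraph (n : nat) (N M : 'M[nat]_(n.+1, n)) : Prop :=
  forall i j, (N i j <= M i j)%N.

Definition num_edges (n : nat) (M : 'M[nat]_(n.+1, n)) : nat :=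
  (\sum_(i < n.+1) \sum_(j < n) M i j)%N.

Definition rankQ (n : nat) (M : 'M[nat]_(n.+1, n)) : nat :=
  \rank (map_mx (fun k : nat => (k%:R : rat)) M).

(* Main.v *)
Require Import Defs.
From mathcomp Require Import all_boot all_order all_algebra.
From mathcomp Require Import all_fingroup.
Import GRing.Theory Num.Theory.
Local Open Scope ring_scope.



Lemma sq_match (k : nat) (B : 'M[rat]_k) : \rank B = k ->
  exists s : 'S_k, forall i, B i (s i) != 0.
Proof.
move=> rk.
have : B \in unitmx by rewrite -row_free_unit /row_free rk.
rewrite unitmxE unitfE /determinant => nz.
have [s Hs]: exists s : 'S_k, \prod_i B i (s i) != 0.
  apply/existsP; apply: contraR nz; rewrite negb_exists => /forallP H.
  by apply/eqP; apply: big1 => s _; move/negPn/eqP: (H s) => ->; rewrite mulr0.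
exists s => i; apply: contra Hs => /eqP Bi.
by rewrite (bigD1 i) //= Bi mul0r.
Qed.

Lemma rect_match (m k : nat) (A : 'M[rat]_(m, k)) : \rank A = k ->
  exists g : 'I_k -> 'I_m, injective g /\ forall j, A (g j) j != 0.
Proof.
move=> rkA.
have := maxrowsub_free A; have := @maxrankfun_inj _ _ _ A.
move: (maxrankfun A) rkA; move: (\rank A) => r f erk.
subst r => finj.
rewrite /row_free => /eqP rk.
have [s Hs] := @sq_match _ _ rk.
exists (fun j => f (s^-1 j)%g); split.
  by move=> a b /finj /perm_inj.
move=> j; have := Hs (s^-1 j)%g; rewrite permKV mxE //.
Qed.

Theorem theorem3p1 (n : nat) (M : 'M[nat]_(n.+1, n)) :
  (1 <= n)%N -> in_G M -> rankQ M = n ->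
  exists N : 'M[nat]_(n.+1, n),
    edge_subgraph N M /\ in_G N /\ num_edges N = n.+1.
Proof.
move=> _ [Hrow _] rk.
have [g [ginj Hg]] := @rect_match _ _ _ rk.
have Mg : forall j, (0 < M (g j) j)%N.
  by move=> j; have := Hg j; rewrite mxE pnatr_eq0 lt0n.
have [h Hh] := fin_all_exists Hrow.
pose N : 'M[nat]_(n.+1, n) :=
  \matrix_(i, j) ((g j == i) + ((i \notin codom g) && (j == h i)))%N.
exists N; split; [|split; [split|]].
- move=> i j; rewrite mxE.
  have [<-|ne] := eqVneq (g j) i.
    by rewrite codom_f /= addn0 Mg.
  rewrite add0n; case: (i \notin codom g) => //=.
  by case: eqP => [->|] //; rewrite Hh.
- move=> i; case: (boolP (i \in codom g)) => [/codomP [j ->]|ni].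
    by exists j; rewrite mxE eqxx.
  by exists (h i); rewrite mxE ni eqxx addn1.
- by move=> j; exists (g j); rewrite mxE eqxx.
rewrite /num_edges.
rewrite (eq_bigr (fun i => \sum_(j < n) ((g j == i) + ((i \notin codom g) && (j == h i))))%N); last first.
  by move=> i _; apply: eq_bigr => j _; rewrite mxE.
under eq_bigr => i _ do rewrite big_split /=.
rewrite big_split /= exchange_big /=.
have -> : (\sum_(j < n) \sum_(i < n.+1) (g j == i))%N = n.
  rewrite (eq_bigr (fun _ => 1%N)); first by rewrite sum1_card card_ord.
  move=> j _; rewrite (bigD1 (g j)) //= eqxx big1 // => i.
  by rewrite eq_sym => /negbTE ->.
have -> : (\sum_(i < n.+1) \sum_(j < n) ((i \notin codom g) && (j == h i)))%N
      = #|[predC codom g]|.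
  rewrite -sum1_card [RHS]big_mkcond /=; apply: eq_bigr => i _.
  rewrite inE; case: (i \notin codom g) => /=; last by rewrite big1.
  rewrite (bigD1 (h i)) //= eqxx big1 // => j.
  by move=> /negbTE ->.
have := cardC (mem (codom g)); rewrite card_codom // !card_ord => e.
exact: e.
Qed.
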